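(* For every fixed $x\in\mathbb{R}$ and $A>1$ there exists $N_3>0$ depending only on $x$ and $A$ such that for all $n>N_3$ and all $w\in[1,A]$: $s_0/n<G_n(x)/2<AG_n(x)/2<\pi/2$ and $$D_n\big(wG_n(x)/2\big)\le e^{1-(w-1)\ln n}\,D_n\big(G_n(x)/2\big),$$ where $G_n(x)=\dfrac{8x-5\ln(2\ln n)}{2n(2\ln n)^{1/2}}+\dfrac{(32\ln n)^{1/2}}{n}$.
   Context: For $\alpha\in(0,\pi)$ let $D_n(\alpha)=\det_{1\le j,l\le n}\left(\frac{1}{2\pi}\int_\alpha^{2\pi-\alpha}e^{i(j-l)\theta}\,d\theta\right)$. By a result of Deift–Its–Krasovsky–Zhou there are constants $c_0\in\mathbb{R}$ and $s_0>0$ such that for every $\varepsilon>0$, uniformly in $s_0/n<\alpha<\pi-\varepsilon$, $$\ln D_n(\alpha)=n^2\ln\cos\frac{\alpha}{2}-\frac14\ln\Big(n\sin\frac{\alpha}{2}\Big)+c_0+O\Big(\frac{1}{n\sin(\alpha/2)}\Big);$$ $s_0$ denotes such a fixed constant. *)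

(* Defs.v *)
From HB Require Import structures.
From mathcomp Require Import all_boot all_order all_algebra.
From mathcomp Require Import all_classical all_reals all_analysis.
From mathcomp Require Import complex.

Set Implicit Arguments.
Unset Strict Implicit.
Unset Printing Implicit Defensive.

Import Order.TTheory GRing.Theory Num.Theory.
Import numFieldNormedType.Exports.
Local Open Scope ring_scope.

(* The Toeplitz entry  (1/2pi) \int_alpha^{2pi-alpha} e^{i k theta} d theta,
   k = j - l, computed as a complex number (real part from cos, imaginary
   part from sin), using the Lebesgue integral over [alpha, 2pi - alpha]. *)
Definition toep_entry (R : realType) (alpha : R) (k : int) : R[i] :=
  Complex
    ((\int[@lebesgue_measure R]_(t in `[alpha, 2 * pi - alpha]%classic)
        cos (k%:~R * t)) / (2 * pi))
    ((\int[@lebesgue_measure R]_(t in `[alpha, 2 * pi - alpha]%classic)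
        sin (k%:~R * t)) / (2 * pi)).

(* D_n(alpha) = det_{1<=j,l<=n} (toep_entry alpha (j - l)).  Indices are
   shifted to 0..n-1, which does not change j - l.  The determinant is a
   real number mathematically; we take its real part to obtain an element
   of R (the imaginary part is 0). *)
Definition Dn (R : realType) (n : nat) (alpha : R) : R :=
  complex.Re (\det (\matrix_(j < n, l < n)
                     toep_entry alpha ((j : nat)%:Z - (l : nat)%:Z))).

Definition Gn (R : realType) (n : nat) (x : R) : R :=
  (8 * x - 5 * ln (2 * ln n%:R)) / (2 * n%:R * Num.sqrt (2 * ln n%:R))
  + Num.sqrt (32 * ln n%:R) / n%:R.

(* The Deift–Its–Krasovsky–Zhou asymptotics with constants c0 and s0:
   for every eps > 0, uniformly in s0/n < alpha < pi - eps,
   ln D_n(alpha) = n^2 ln cos(alpha/2) - 1/4 ln(n sin(alpha/2)) + c0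
                   + O(1/(n sin(alpha/2)))   as n -> oo
   (in particular D_n(alpha) > 0 there, so that ln D_n makes sense). *)
Definition DIKZ_asymptotics (R : realType) (c0 s0 : R) : Prop :=
  forall eps : R, 0 < eps ->
  exists C : R, exists N : nat, forall n : nat, (N <= n)%N ->
  forall alpha : R, s0 / n%:R < alpha -> alpha < pi - eps ->
    0 < Dn n alpha /\
    `| ln (Dn n alpha)
       - (n%:R ^+ 2 * ln (cos (alpha / 2))
          - 4^-1 * ln (n%:R * sin (alpha / 2)) + c0) |
      <= C / (n%:R * sin (alpha / 2)).

(* Main.v *)
Require Import Defs.
From HB Require Import structures.
From mathcomp Require Import all_boot all_order all_algebra.
From mathcomp Require Import all_classical all_reals all_analysis.
From mathcomp Require Import complex.
From mathcomp Require Import ring lra.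
Import Order.TTheory GRing.Theory Num.Theory.
Import numFieldNormedType.Exports.
Local Open Scope ring_scope.

Section S.
Context {R : realType}.
Local Open Scope classical_set_scope.

Lemma mono0 (f df : R -> R) y : 0 <= y ->
  (forall x : R, is_derive x (1:R) f (df x)) -> (forall x : R, 0 <= x -> 0 <= df x) ->
  f 0 <= f y.
Proof.
move=> y0 fd dpos.
have H1 : forall x, x \in `]0, y[%R -> is_derive x 1 f (df x) by move=> x _; exact: fd.
have H2 : {within `[0, y], continuous f}.
  by apply: derivable_within_continuous => x _; exact: (@ex_derive _ _ _ _ _ _ _ (fd x)).
case: (MVT_segment y0 H1 H2) => c; rewrite in_itv /= => /andP[c0 _] E.
by rewrite -subr_ge0 E mulr_ge0 ?subr0 // dpos.
Qed.

Lemma sin_le_id (y : R) : 0 <= y -> sin y <= y.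
Proof.
move=> y0.
have := @mono0 (id - sin) (fun t => 1 - cos t) y y0.
rewrite !fctE sin0 subr0 subr_ge0; apply.
  all: try (move=> x; apply: trigger_derive; [apply: is_deriveB|by []]).
by move=> x _; rewrite subr_ge0 cos_le1.
Qed.

Ltac dfin := rewrite /= ?expr1 /GRing.scale /=; lra.

Lemma cos_ge_poly (y : R) : 0 <= y -> 1 - y ^+ 2 / 2 <= cos y.
Proof.
move=> y0.
have Hd : forall x : R, is_derive x (1:R) (cos - cst 1 + (2^-1 : R) *: (@id R ^+ 2)) (x - sin x).
  by move=> x; eapply trigger_derive; [apply: is_deriveD|dfin].
have Hp : (forall x : R, 0 <= x -> 0 <= x - sin x) by move=> x x0; rewrite subr_ge0 sin_le_id.
have := @mono0 _ _ y y0 Hd Hp.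
rewrite !fctE cos0 expr0n /= /GRing.scale /=; lra.
Qed.

Lemma sin_ge_poly (y : R) : 0 <= y -> y - y ^+ 3 / 6 <= sin y.
Proof.
move=> y0.
have Hd : forall x : R, is_derive x (1:R) (sin - id + (6^-1 : R) *: (@id R ^+ 3)) (cos x - 1 + x ^+ 2 / 2).
  move=> x; eapply trigger_derive; [apply: is_deriveD|]; rewrite /= /GRing.scale /=. lra.
have Hp : (forall x : R, 0 <= x -> 0 <= cos x - 1 + x ^+ 2 / 2).
  by move=> x x0; have := @cos_ge_poly x x0; lra.
have := @mono0 _ _ y y0 Hd Hp.
rewrite !fctE sin0 expr0n /= /GRing.scale /=; lra.
Qed.

Lemma cos_le_poly (y : R) : 0 <= y -> cos y <= 1 - y ^+ 2 / 2 + y ^+ 4 / 24.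
Proof.
move=> y0.
have Hd : forall x : R, is_derive x (1:R) (cst 1 - (2^-1 : R) *: (@id R ^+ 2) + (24^-1 : R) *: (@id R ^+ 4) - cos) (- x + x ^+ 3 / 6 + sin x).
  move=> x.
  have h1 : is_derive x (1:R) (@id R ^+ 2) ((2%:R * x ^+ 1) *: 1) by apply: is_deriveX.
  have h2 : is_derive x (1:R) (@id R ^+ 4) ((4%:R * x ^+ 3) *: 1) by apply: is_deriveX.
  have h3 : is_derive x (1:R) (cst 1 - (2^-1 : R) *: (@id R ^+ 2)) (0 - (2^-1 : R) *: ((2%:R * x ^+ 1) *: 1)) by apply: is_deriveB.
  have h4 : is_derive x (1:R) ((24^-1 : R) *: (@id R ^+ 4)) ((24^-1 : R) *: ((4%:R * x ^+ 3) *: 1)) by apply: is_deriveZ.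
  have h6 := is_deriveB (is_deriveD h3 h4) (is_derive_cos x).
  apply: trigger_derive h6 _.
  rewrite /= /GRing.scale /=. lra.
have Hp : (forall x : R, 0 <= x -> 0 <= - x + x ^+ 3 / 6 + sin x).
  by move=> x x0; have := @sin_ge_poly x x0; lra.
have := @mono0 _ _ y y0 Hd Hp.
rewrite !fctE cos0 expr0n /= /GRing.scale /=; lra.
Qed.

Lemma ln_le_sub1 (p : R) : 0 < p -> ln p <= p - 1.
Proof.
move=> p0; have := expR_ge1Dx (ln p); rewrite lnK ?posrE //; lra.
Qed.

Lemma ln_diff (p q : R) : 0 < p -> 0 < q -> ln p - ln q <= p / q - 1.
Proof.
move=> p0 q0; rewrite -ln_div ?posrE //; apply: ln_le_sub1; exact: divr_gt0.
Qed.

Lemma sin_ge_half (y : R) : 0 <= y -> y <= 1 -> y / 2 <= sin y.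
Proof.
move=> y0 y1; have := @sin_ge_poly y y0.
have : y ^+ 3 <= y by rewrite !exprS expr0 mulr1; nra.
lra.
Qed.

Lemma core_est (m s L w C u v : R) :
  0 < m -> 0 < s -> s ^+ 2 = 2 * L -> s ^+ 4 / 16 <= m -> s ^+ 2 <= m ->
  `|C| <= s / 32 -> 1 <= w -> v = w * u -> 0 < u -> 3 * s / 4 <= m * u ->
  m * v <= s ^+ 2 / 4 ->
  m ^+ 2 * ln (cos v) - 4^-1 * ln (m * sin v) + C / (m * sin v)
  - (m ^+ 2 * ln (cos u) - 4^-1 * ln (m * sin u) - C / (m * sin u))
  <= 1 - (w - 1) * L.
Proof.
move=> m0 sp Ls mL ms Cs w1 vwu u0 mu34 mv.
have uv : u <= v by rewrite vwu; clear -u0 w1; nra.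
have v14 : v <= 1 / 4 by clear -mv ms m0; nra.
have u1 : u <= 1 by lra.
have v0 : 0 <= v by lra.
have v1 : v <= 1 by lra.
have su1 := @sin_ge_half u (ltW u0) u1.
have sv1 := @sin_ge_half v v0 v1.
have su2 := @sin_le_id u (ltW u0).
have cu1 := @cos_ge_poly u (ltW u0).
have cv1 := @cos_ge_poly v v0.
have cv2 := @cos_le_poly v v0.
have u2 : u ^+ 2 <= 1 by rewrite expr2; clear -u0 u1; nra.
have v2 : v ^+ 2 <= 1 by rewrite expr2; clear -v0 v1; nra.
have cu0 : 1 / 2 <= cos u by lra.
have cv0 : 1 / 2 <= cos v by lra.
have cule1 := @cos_le1 R u.
have msu : m * (u / 2) <= m * sin u by rewrite ler_pM2l.
have msv : m * (u / 2) <= m * sin v by rewrite ler_pM2l //; lra.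
have msu0 : 0 < m * sin u.
  by apply: (lt_le_trans _ msu); apply: mulr_gt0 => //; lra.
have msv0 : 0 < m * sin v.
  by apply: (lt_le_trans _ msv); apply: mulr_gt0 => //; lra.
have mu2 : m * (u / 2) = (m * u) / 2 by ring.
have hC := ler_norm C.
have hCu : C / (m * sin u) <= 1 / 8.
  by rewrite ler_pdivrMr //; lra.
have hCv : C / (m * sin v) <= 1 / 8.
  by rewrite ler_pdivrMr //; lra.
have hsin : ln (m * sin u) - ln (m * sin v) <= 1.
  apply: le_trans (ln_diff _ _ msu0 msv0) _.
  rewrite lerBlDr ler_pdivrMr //.
  have : m * u <= m * v by rewrite ler_pM2l.
  have : m * sin u <= m * u by rewrite ler_pM2l.
  have : m * (v / 2) <= m * sin v by rewrite ler_pM2l.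
  have : m * (v / 2) = (m * v) / 2 by ring.
  lra.
have hcos1 : cos v / cos u - 1 <= - (v ^+ 2 - u ^+ 2) / 2 + v ^+ 4 / 12.
  rewrite lerBlDr ler_pdivrMr; last by lra.
  have D0 : 0 <= v ^+ 2 - u ^+ 2.
    by rewrite subr_ge0 ler_pXn2r // ?nnegrE; lra.
  have Q0 : 0 <= v ^+ 4 by exact: exprn_ge0.
  have Ev : v ^+ 4 = v ^+ 2 * v ^+ 2 by rewrite -exprD.
  clear -D0 Q0 cv2 cu1 cule1 cu0 Ev; nra.
have hcos : m ^+ 2 * (ln (cos v) - ln (cos u)) <= - (w - 1) * L + 1 / 12.
  have h1 : ln (cos v) - ln (cos u) <= - (v ^+ 2 - u ^+ 2) / 2 + v ^+ 4 / 12.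
    have cu0' : 0 < cos u by lra.
    have cv0' : 0 < cos v by lra.
    exact: le_trans (ln_diff _ _ cv0' cu0') hcos1.
  apply: le_trans (ler_wpM2l (sqr_ge0 m) h1) _.
  have e1 : m ^+ 2 * (- (v ^+ 2 - u ^+ 2) / 2 + v ^+ 4 / 12)
      = - (w ^+ 2 - 1) * (m * u) ^+ 2 / 2 + (m ^+ 2 * v ^+ 4) / 12.
    by rewrite vwu; ring.
  rewrite e1.
  have mv0 : 0 <= m * v by apply: mulr_ge0; lra.
  have mv2 : (m * v) ^+ 2 <= m.
    have : (m * v) ^+ 2 <= (s ^+ 2 / 4) ^+ 2 by rewrite ler_pXn2r // ?nnegrE //; apply: le_trans mv; lra.
    have : (s ^+ 2 / 4) ^+ 2 = s ^+ 4 / 16 :> R by field.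
    lra.
  have X1 : m ^+ 2 * v ^+ 4 <= 1.
    have e2 : (m ^+ 2 * v ^+ 4) * m ^+ 2 = ((m * v) ^+ 2) ^+ 2 by ring.
    have : ((m * v) ^+ 2) ^+ 2 <= m ^+ 2.
      by rewrite ler_pXn2r // ?nnegrE; [exact: sqr_ge0|lra].
    rewrite -e2 => h.
    have m20 : 0 < m ^+ 2 by exact: exprn_gt0.
    have X0 : 0 <= m ^+ 2 * v ^+ 4 by apply: mulr_ge0; apply: exprn_ge0; lra.
    clear -h m20 X0; nra.
  have T1 : 9 * s ^+ 2 / 16 <= (m * u) ^+ 2.
    have : (3 * s / 4) ^+ 2 <= (m * u) ^+ 2 by rewrite ler_pXn2r // ?nnegrE; lra.
    have : (3 * s / 4) ^+ 2 = 9 * s ^+ 2 / 16 by field.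
    lra.
  have : (w - 1) * L <= (w ^+ 2 - 1) * (m * u) ^+ 2 / 2.
    have hw : 0 <= w - 1 by lra.
    have hT : L <= (w + 1) * (m * u) ^+ 2 / 2.
      have : 0 <= (w - 1) * (m * u) ^+ 2 by apply: mulr_ge0 => //; exact: sqr_ge0.
      lra.
    have h0 : 0 <= (w + 1) * (m * u) ^+ 2 / 2 - L by rewrite subr_ge0.
    have := mulr_ge0 hw h0; lra.
  lra.
lra.
Qed.
End S.
Theorem lemma9 (R : realType) (c0 s0 : R) (hs0 : 0 < s0)
    (hDIKZ : DIKZ_asymptotics c0 s0) :
  forall (x A : R), 1 < A ->
  exists N3 : R, 0 < N3 /\
  forall n : nat, N3 < n%:R ->
  forall w : R, 1 <= w -> w <= A ->
    [/\ s0 / n%:R < Gn n x / 2,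
        Gn n x / 2 < A * Gn n x / 2,
        A * Gn n x / 2 < pi / 2 &
        Dn n (w * Gn n x / 2)
          <= expR (1 - (w - 1) * ln n%:R) * Dn n (Gn n x / 2)].
Proof.
move=> x A A1.
have pi2 : 1 <= pi / 2 :> R.
  by rewrite ler_pdivlMr // mul1r pi_ge2.
have [C [N HN]] := hDIKZ (pi / 2) (lt_le_trans ltr01 pi2).
clear hDIKZ.
set S0 := 13 + 8 * `|x| + s0 + 5 * A + 32 * `|C|.
have S00 : 13 <= S0 by rewrite /S0; have := normr_ge0 x; have := normr_ge0 C; lra.
exists (Num.max N%:R (expR (S0 ^+ 2))).
split; first by rewrite lt_max expR_gt0 orbT.
move=> n; rewrite gt_max => /andP[nN nK] w w1 wA.
set m := n%:R in nN nK *.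
have m0 : 0 < m by apply: lt_trans nK; exact: expR_gt0.
have Nn : (N <= n)%N by move: nN; rewrite /m ltr_nat => /ltnW.
set L := ln m.
have LK : S0 ^+ 2 < L by rewrite /L -ltr_expR lnK ?posrE.
have L0 : 0 < L by have := sqr_ge0 S0; lra.
set s := Num.sqrt (2 * L).
have s2 : s ^+ 2 = 2 * L by rewrite sqr_sqrtr //; lra.
have s0' : 0 <= s by exact: sqrtr_ge0.
have sS : S0 <= s.
  have : S0 ^+ 2 <= s ^+ 2 by rewrite s2; lra.
  rewrite -ler_sqrt ?sqrtr_sqr; last exact: sqr_ge0.
  by rewrite !ger0_norm //; lra.
have sp : 0 < s by lra.
set lnl := ln (2 * L).
have lnl0 : 0 <= lnl by apply: ln_ge0; have := sqr_ge0 (S0 - 13); nra.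
have lnls : lnl <= 2 * s.
  rewrite /lnl -s2 lnXn // mulr2n; have := ln_sublinear sp; lra.
set d := (8 * x - 5 * lnl) / (2 * s).
have sq32 : Num.sqrt (32 * L) = 4 * s.
  rewrite (_ : 32 * L = 4 ^+ 2 * (2 * L)); last by ring.
  by rewrite sqrtrM ?sqrtr_sqr ?ger0_norm //; exact: sqr_ge0.
have Gdef : Gn n x = (d + 4 * s) / m.
  rewrite /Gn -/m -/L -/s -/lnl sq32 /d; field.
  by apply/andP; split; apply/lt0r_neq0.
have hx := normr_ge0 x; have hC := normr_ge0 C.
have hxx : - `|x| <= x <= `|x| by rewrite -ler_norml.
have hd1 : d <= s.
  rewrite /d ler_pdivrMr; last lra.
  have : 13 + 8 * `|x| <= s by rewrite /S0 in sS; have := normr_ge0 C; lra.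
  nra.
have hd2 : - s <= d.
  rewrite /d ler_pdivlMr; last lra.
  have : 13 + 8 * `|x| <= s by rewrite /S0 in sS; have := normr_ge0 C; lra.
  nra.
set P := d + 4 * s.
have mL : s ^+ 4 / 16 <= m.
  have -> : m = expR (L / 2 * 2%:R) by rewrite mulfVK ?pnatr_eq0 // lnK ?posrE.
  rewrite expRM_natr.
  have := expR_ge1Dx (L / 2).
  have -> : s ^+ 4 = (2 * L) ^+ 2 by rewrite -s2 -exprM.
  move=> h; have h0 : 0 <= L / 2 by lra.
  nra.
have sA : 5 * A <= s by rewrite /S0 in sS; lra.
have ms : s ^+ 2 <= m.
  have : 16 <= s ^+ 2 by nra.
  move: mL; rewrite (_ : s ^+ 4 = s ^+ 2 * s ^+ 2); last by rewrite -exprD.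
  nra.
set G := Gn n x.
have G0 : 0 < G by rewrite /G Gdef divr_gt0 //; rewrite /P; lra.
set u := G / 2 / 2.
set v := w * G / 2 / 2.
have vwu : v = w * u by rewrite /v /u; ring.
have hmu : m * u = P / 4.
  by rewrite /u /G Gdef /P; field; exact: lt0r_neq0 m0.
have u0 : 0 < u by rewrite /u; lra.
have uv : u <= v by rewrite vwu; nra.
have mv : m * v <= s ^+ 2 / 4.
  rewrite vwu (mulrCA m w u) hmu.
  have : 0 <= P / 4 by rewrite /P; lra.
  have : P / 4 <= 5 * s / 4 by rewrite /P; lra.
  nra.
have v14 : v <= 1 / 4 by nra.
have P3 : 3 * s <= P by rewrite /P; lra.
have P5 : P <= 5 * s by rewrite /P; lra.
have hG2 : G / 2 = (P / 2) / m by rewrite /G Gdef /P; field; exact: lt0r_neq0 m0.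
have part1 : s0 / m < G / 2.
  rewrite hG2 ltr_pM2r ?invr_gt0 //.
  have : s0 <= s by rewrite /S0 in sS; lra.
  lra.
have part2 : G / 2 < A * G / 2 by nra.
have part3 : A * G / 2 < 1.
  rewrite (_ : A * G / 2 = (A * (P / 2)) / m); last first.
    by rewrite /G Gdef /P; field; exact: lt0r_neq0 m0.
  rewrite ltr_pdivrMr // mul1r.
  have : A * P <= 5 * A * s by nra.
  nra.
have wG1 : G / 2 <= w * G / 2 by nra.
have wG2 : w * G / 2 <= A * G / 2 by nra.
have hpi : pi - pi / 2 = pi / 2 :> R by field.
have mu34 : 3 * s / 4 <= m * u by rewrite hmu; lra.
have Cs : `|C| <= s / 32 by rewrite /S0 in sS; lra.
have core := @core_est R m s L w C u v m0 sp s2 mL ms Cs w1 vwu u0 mu34 mv.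
have part3' : A * G / 2 < pi / 2 by exact: lt_le_trans part3 pi2.
have ha : G / 2 < pi - pi / 2 by rewrite hpi; lra.
have hb1 : s0 / m < w * G / 2 by lra.
have hb2 : w * G / 2 < pi - pi / 2 by rewrite hpi; lra.
have [Da0 Ha] := HN n Nn (G / 2) part1 ha.
have [Db0 Hb] := HN n Nn (w * G / 2) hb1 hb2.
clear HN.
rewrite -/m -/u in Ha; rewrite -/m -/v in Hb.
move: Ha Hb; rewrite !ler_norml => /andP[Ha1 _] /andP[_ Hb2].
split; [exact: part1 | exact: part2 | exact: part3' |].
have key : ln (Dn n (w * G / 2)) - ln (Dn n (G / 2)) <= 1 - (w - 1) * L.
  clear -core Ha1 Hb2; lra.
rewrite -(lnK Db0) -[X in _ <= _ * X](lnK Da0) -expRD ler_expR.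
by rewrite -lerBlDr.
Qed.
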